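(* Let $\Phi(v_1,\dots,v_r)$ be an $\mathrm{st}$-prenex formula all of whose parameters are standard. Then (in SPOT) for every standard set $S$ there is a standard set $P$ such that for all standard $v_1,\dots,v_r$: $$\langle v_1,\dots,v_r\rangle\in P\iff \langle v_1,\dots,v_r\rangle\in S\wedge\Phi(v_1,\dots,v_r).$$
   Context: We work in the theory SPOT. Its language is the $\in$-language (membership together with the usual defined symbols of mathematics such as $\mathbb N,\mathbb R,<,+,\cdot$) enriched by a unary predicate $\mathrm{st}$ (''$x$ is standard''). An $\in$-formula is a formula not mentioning $\mathrm{st}$. $\forall^{\mathrm{st}}x$ and $\exists^{\mathrm{st}}x$ denote quantifiers restricted to standard sets. The axioms of SPOT are: ZF; Transfer: for every $\in$-formula $\varphi(x)$ all of whose parameters are standard, $\forall^{\mathrm{st}}x\,\varphi(x)\to\forall x\,\varphi(x)$; Nontriviality: $\exists \nu\in\mathbb N\,\forall^{\mathrm{st}}n\in\mathbb N\,(n\neq\nu)$; Standard Part: $\forall A\subseteq\mathbb N\,\exists^{\mathrm{st}}B\subseteq\mathbb N\,\forall^{\mathrm{st}}n\in\mathbb N\,(n\in B\iff n\in A)$. An $\mathrm{st}$-prenex formula is one of the form $\mathsf Q^{\mathrm{st}}u_1\cdots\mathsf Q^{\mathrm{st}}u_s\,\psi(u_1,\dots,u_s,v_1,\dots,v_r)$ where $\psi$ is an $\in$-formula and each $\mathsf Q^{\mathrm{st}}$ is $\forall^{\mathrm{st}}$ or $\exists^{\mathrm{st}}$ (all quantifiers over standard sets precede all ordinary quantifiers).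 *)

(* Defs.v *)
(* A semantic (model-theoretic) rendering of the theory SPOT:
   formulas of the (∈, =, st)-language are a deep embedding; a model of SPOT
   is a type M with relations mem, st satisfying the axioms; "SPOT proves X"
   is rendered as "X holds in every model of SPOT" (Gödel completeness). *)
From Stdlib Require Import List Arith.
Import ListNotations.

Inductive form : Type :=
| FMem : nat -> nat -> form
| FEq  : nat -> nat -> form
| FSt  : nat -> form
| FBot : form
| FNot : form -> form
| FAnd : form -> form -> form
| FOr  : form -> form -> form
| FImp : form -> form -> form
| FAll : nat -> form -> form
| FEx  : nat -> form -> form.

Fixpoint in_formula (p : form) : Prop :=
  match p with
  | FMem _ _ | FEq _ _ | FBot => True
  | FSt _ => False
  | FNot q => in_formula q
  | FAnd q r | FOr q r | FImp q r => in_formula q /\ in_formula r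
  | FAll _ q | FEx _ q => in_formula q
  end.

Fixpoint is_free (y : nat) (p : form) : Prop :=
  match p with
  | FMem a b | FEq a b => y = a \/ y = b
  | FSt a => y = a
  | FBot => False
  | FNot q => is_free y q
  | FAnd q r | FOr q r | FImp q r => is_free y q \/ is_free y r
  | FAll x q | FEx x q => y <> x /\ is_free y q
  end.

Fixpoint st_prenex (pre : list (bool * nat)) (psi : form) : form :=
  match pre with
  | [] => psi
  | (true, u) :: pre' => FAll u (FImp (FSt u) (st_prenex pre' psi))
  | (false, u) :: pre' => FEx u (FAnd (FSt u) (st_prenex pre' psi))
  end.

Definition upd {M : Type} (rho : nat -> M) (x : nat) (a : M) : nat -> M :=
  fun y => if Nat.eqb y x then a else rho y.

Fixpoint upd_list {M : Type} (rho : nat -> M) (xs : list nat) (as_ : list M)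
  : nat -> M :=
  match xs, as_ with
  | x :: xs', a :: as' => upd (upd_list rho xs' as') x a
  | _, _ => rho
  end.

Fixpoint sat {M : Type} (mem : M -> M -> Prop) (st : M -> Prop)
  (rho : nat -> M) (p : form) : Prop :=
  match p with
  | FMem x y => mem (rho x) (rho y)
  | FEq x y => rho x = rho y
  | FSt x => st (rho x)
  | FBot => False
  | FNot q => ~ sat mem st rho q
  | FAnd q r => sat mem st rho q /\ sat mem st rho r
  | FOr q r => sat mem st rho q \/ sat mem st rho r
  | FImp q r => sat mem st rho q -> sat mem st rho r
  | FAll x q => forall a, sat mem st (upd rho x a) q
  | FEx x q => exists a, sat mem st (upd rho x a) q
  end.

Section SetNotions.
Context {M : Type} (mem : M -> M -> Prop).

Definition is_empty (e : M) : Prop := forall z, ~ mem z e.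
Definition is_succ (y s : M) : Prop := forall z, mem z s <-> (mem z y \/ z = y).
Definition inductive (I : M) : Prop :=
  (exists e, is_empty e /\ mem e I) /\
  (forall y, mem y I -> exists s, is_succ y s /\ mem s I).
Definition is_omega (w : M) : Prop :=
  forall z, mem z w <-> (forall I, inductive I -> mem z I).
Definition subset (A B : M) : Prop := forall z, mem z A -> mem z B.

(* Kuratowski pair p = <a, b> = {{a},{a,b}} *)
Definition is_pair (p a b : M) : Prop :=
  forall z, mem z p <->
    ((forall w, mem w z <-> w = a) \/ (forall w, mem w z <-> (w = a \/ w = b))).

Fixpoint is_tuple (t : M) (l : list M) : Prop :=
  match l with
  | [] => is_empty t
  | [a] => t = a
  | a :: l' => exists t', is_tuple t' l' /\ is_pair t a t'
  end.
End SetNotions.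

Record SPOT_model (M : Type) (mem : M -> M -> Prop) (st : M -> Prop) : Prop := {
  ax_ext : forall x y, (forall z, mem z x <-> mem z y) -> x = y;
  ax_pair : forall a b, exists p, forall z, mem z p <-> (z = a \/ z = b);
  ax_union : forall x, exists u, forall z, mem z u <-> exists y, mem y x /\ mem z y;
  ax_power : forall x, exists p, forall z, mem z p <-> subset mem z x;
  ax_inf : exists I, inductive mem I;
  ax_found : forall x, (exists y, mem y x) ->
      exists y, mem y x /\ ~ exists z, mem z y /\ mem z x;
  ax_sep : forall (phi : form), in_formula phi -> forall (x : nat) (rho : nat -> M) (A : M),
      exists B, forall z, mem z B <-> (mem z A /\ sat mem st (upd rho x z) phi);
  ax_repl : forall (phi : form), in_formula phi -> forall (x y : nat), x <> y ->
      forall (rho : nat -> M) (A : M),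
      (forall a, mem a A -> exists b, sat mem st (upd (upd rho x a) y b) phi /\
          forall b', sat mem st (upd (upd rho x a) y b') phi -> b' = b) ->
      exists B, forall b, mem b B <->
          exists a, mem a A /\ sat mem st (upd (upd rho x a) y b) phi;
  ax_transfer : forall (phi : form), in_formula phi -> forall (x : nat) (rho : nat -> M),
      (forall y, is_free y phi -> y <> x -> st (rho y)) ->
      (forall a, st a -> sat mem st (upd rho x a) phi) ->
      forall a, sat mem st (upd rho x a) phi;
  ax_nontriv : exists w, is_omega mem w /\
      exists nu, mem nu w /\ forall n, st n -> mem n w -> n <> nu;
  ax_stpart : forall w, is_omega mem w -> forall A, subset mem A w ->
      exists B, st B /\ subset mem B w /\
        forall n, st n -> mem n w -> (mem n B <-> mem n A)
}.

(* Main.v *)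
Require Import Defs.
From Stdlib Require Import List Arith Lia Classical FunctionalExtensionality.
Import ListNotations.

Ltac eqbs := repeat match goal with |- context [Nat.eqb ?a ?b] =>
  first [rewrite (Nat.eqb_refl a) | rewrite (proj2 (Nat.eqb_neq a b)) by lia] end;
  cbv beta iota.

Section S.
Context {M : Type} (mem : M -> M -> Prop) (st : M -> Prop).

Lemma upd_eq (rho : nat -> M) x a : upd rho x a x = a.
Proof. unfold upd. now rewrite Nat.eqb_refl. Qed.
Lemma upd_neq (rho : nat -> M) x a y : y <> x -> upd rho x a y = rho y.
Proof. intro H. unfold upd. now rewrite (proj2 (Nat.eqb_neq _ _) H). Qed.

Lemma sat_coinc : forall p (r1 r2 : nat -> M),
  (forall y, is_free y p -> r1 y = r2 y) -> (sat mem st r1 p <-> sat mem st r2 p).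
Proof.
  induction p; intros r1 r2 H; cbn [sat is_free] in *.
  - rewrite !H by auto. tauto.
  - rewrite !H by auto. tauto.
  - rewrite H by auto. tauto.
  - tauto.
  - rewrite (IHp r1 r2) by auto. tauto.
  - rewrite (IHp1 r1 r2), (IHp2 r1 r2) by auto. tauto.
  - rewrite (IHp1 r1 r2), (IHp2 r1 r2) by auto. tauto.
  - rewrite (IHp1 r1 r2), (IHp2 r1 r2) by auto. tauto.
  - assert (Hq : forall a, sat mem st (upd r1 n a) p <-> sat mem st (upd r2 n a) p).
    { intro a. apply IHp. intros y Hy. unfold upd. destruct (Nat.eqb_spec y n); auto. }
    split; intros H1 a; specialize (H1 a); apply Hq; auto.
  - assert (Hq : forall a, sat mem st (upd r1 n a) p <-> sat mem st (upd r2 n a) p).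
    { intro a. apply IHp. intros y Hy. unfold upd. destruct (Nat.eqb_spec y n); auto. }
    split; intros [a H1]; exists a; apply Hq; auto.
Qed.


Definition FIff p q := FAnd (FImp p q) (FImp q p).
Definition FPair (z w p a b : nat) : form :=
  FAll z (FIff (FMem z p) (FOr (FAll w (FIff (FMem w z) (FEq w a)))
                                (FAll w (FIff (FMem w z) (FOr (FEq w a) (FEq w b)))))).
Fixpoint Tup (B t : nat) (xs : list nat) : form :=
  match xs with
  | [] => FAll B (FNot (FMem B t))
  | x :: xs' => match xs' with
                | [] => FEq t x
                | _ => FEx B (FAnd (Tup (B+3) B xs') (FPair (B+1) (B+2) t x B))
                end
  end.

Lemma sat_pair : forall (rho : nat -> M) z w p a b, z <> w -> p <> z -> p <> w ->
  a <> z -> a <> w -> b <> z -> b <> w ->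
  (sat mem st rho (FPair z w p a b) <-> is_pair mem (rho p) (rho a) (rho b)).
Proof.
  intros. unfold FPair, FIff, is_pair. cbn [sat]. unfold upd. eqbs.
  split; intros H' Z; specialize (H' Z); firstorder.
Qed.

Lemma free_pair : forall y z w p a b, is_free y (FPair z w p a b) -> y = p \/ y = a \/ y = b.
Proof. intros. unfold FPair, FIff in H. cbn [is_free] in H. intuition. Qed.

Lemma sat_tup : forall xs B t (rho : nat -> M), t < B -> Forall (fun x => x < B) xs ->
  (sat mem st rho (Tup B t xs) <-> is_tuple mem (rho t) (map rho xs)).
Proof.
  induction xs as [|x xs IH]; intros B t rho Ht Hxs.
  - cbn. unfold upd. eqbs. unfold is_empty. tauto.
  - destruct xs as [|x2 xs].
    + cbn. tauto.
    + inversion Hxs; subst.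
      change (Tup B t (x :: x2 :: xs)) with (FEx B (FAnd (Tup (B+3) B (x2::xs)) (FPair (B+1) (B+2) t x B))).
      change (map rho (x :: x2 :: xs)) with (rho x :: map rho (x2 :: xs)).
      cbn [sat]. remember (x2 :: xs) as l.
      assert (Hm : forall T, map (upd rho B T) l = map rho l).
      { intro T. apply map_ext_in. intros y Hy. apply upd_neq.
        rewrite Forall_forall in H2. specialize (H2 y Hy). lia. }
      assert (Hl : exists a l', map rho l = a :: l') by (subst; cbn; eauto).
      destruct Hl as [a0 [l' Hl]]. rewrite Hl.
      change (is_tuple mem (rho t) (rho x :: a0 :: l')) with
        (exists t', is_tuple mem t' (a0 :: l') /\ is_pair mem (rho t) (rho x) t').
      assert (HF : Forall (fun x => x < B + 3) l).
      { eapply Forall_impl; [|exact H2]. cbn; intros; lia. }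
      split.
      * intros [T [K1 K3]]. exists T.
        rewrite IH in K1 by (lia || exact HF).
        rewrite upd_eq, Hm, Hl in K1. split; auto.
        rewrite sat_pair in K3 by lia. rewrite !upd_neq, upd_eq in K3 by lia. auto.
      * intros [T [K1 K3]]. exists T. split.
        -- rewrite IH by (lia || exact HF).
           rewrite upd_eq, Hm, Hl. auto.
        -- rewrite sat_pair by lia. rewrite !upd_neq, upd_eq by lia. auto.
Qed.

Lemma free_tup : forall xs B t y, t < B -> Forall (fun x => x < B) xs ->
  is_free y (Tup B t xs) -> y = t \/ In y xs.
Proof.
  induction xs as [|x xs IH]; intros B t y Ht Hxs Hy.
  - cbn in Hy. intuition.
  - destruct xs as [|x2 xs].
    + cbn in Hy. destruct Hy; subst; cbn; auto.
    + inversion Hxs; subst.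
      change (Tup B t (x :: x2 :: xs)) with (FEx B (FAnd (Tup (B+3) B (x2::xs)) (FPair (B+1) (B+2) t x B))) in Hy.
      cbn [is_free] in Hy. destruct Hy as [Hne [Hy|Hy]].
      * apply IH in Hy; [|lia| eapply Forall_impl; [|exact H2]]; [|cbn; intros; lia].
        destruct Hy; [congruence|]. right; right; auto.
      * apply free_pair in Hy. destruct Hy as [|[|]]; subst; cbn; auto. congruence.
Qed.


Fixpoint exlist (xs : list nat) (phi : form) : form :=
  match xs with [] => phi | x :: xs' => exlist xs' (FEx x phi) end.

Lemma sat_exlist : forall xs phi (rho : nat -> M),
  sat mem st rho (exlist xs phi) <->
  exists as_, length as_ = length xs /\ sat mem st (upd_list rho xs as_) phi.
Proof.
  induction xs as [|x xs IH]; intros phi rho; cbn [exlist].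
  - split; [intros H; exists []; cbn; auto | intros [as_ [H1 H2]]; destruct as_; cbn in *; auto; discriminate].
  - rewrite IH. cbn [sat]. split.
    + intros [as_ [H1 [a H2]]]. exists (a :: as_). cbn. auto.
    + intros [as_ [H1 H2]]. destruct as_ as [|a as_]; [discriminate|].
      exists as_. cbn in *. split; [lia|]. exists a. auto.
Qed.

Lemma free_exlist : forall xs phi y, is_free y (exlist xs phi) -> ~ In y xs /\ is_free y phi.
Proof.
  induction xs as [|x xs IH]; intros phi y H; cbn [exlist] in H.
  - auto.
  - apply IH in H. cbn in H. destruct H as [H1 [H2 H3]]. split; auto.
    intros [->|]; auto.
Qed.

Lemma in_exlist : forall xs phi, in_formula phi -> in_formula (exlist xs phi).
Proof. induction xs; intros; cbn; auto. Qed.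

Lemma in_tup : forall xs B t, in_formula (Tup B t xs).
Proof.
  induction xs as [|x xs IH]; intros; cbn; auto. destruct xs; cbn; auto.
  split; [apply IH|]. cbn. tauto.
Qed.

Fixpoint intf (pre : list (bool * nat)) (psi : form) : form :=
  match pre with
  | [] => psi
  | (true, u) :: pre' => FAll u (intf pre' psi)
  | (false, u) :: pre' => FEx u (intf pre' psi)
  end.

Lemma in_intf : forall pre psi, in_formula psi -> in_formula (intf pre psi).
Proof. induction pre as [|[[] u] pre IH]; intros; cbn; auto. Qed.

Lemma free_intf : forall pre psi y, is_free y (intf pre psi) -> is_free y (st_prenex pre psi).
Proof. induction pre as [|[[] u] pre IH]; intros psi y H; cbn in *; intuition. Qed.

Fixpoint mv (p : form) : nat :=
  match p with
  | FMem a b | FEq a b => max a b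
  | FSt a => a
  | FBot => 0
  | FNot q => mv q
  | FAnd q r | FOr q r | FImp q r => max (mv q) (mv r)
  | FAll x q | FEx x q => max x (mv q)
  end.

Lemma free_mv : forall p y, is_free y p -> y <= mv p.
Proof. induction p; intros y H; cbn in *; intuition; subst; try lia;
  try (specialize (IHp1 _ H0); lia); try (specialize (IHp2 _ H0); lia);
  try (specialize (IHp _ H1); lia).
Qed.

Lemma upd_list_notin : forall xs as_ (rho : nat -> M) y, ~ In y xs -> upd_list rho xs as_ y = rho y.
Proof.
  induction xs as [|x xs IHxs]; intros [|a as_] rho y H; cbn; auto.
  rewrite upd_neq by (intro; subst; apply H; left; auto). apply IHxs. intro; apply H; right; auto.
Qed.

Lemma upd_list_ext : forall xs as_ (r1 r2 : nat -> M) y, r1 y = r2 y -> upd_list r1 xs as_ y = upd_list r2 xs as_ y.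
Proof.
  induction xs as [|x xs IHxs]; intros [|a as_] r1 r2 y H; cbn; auto.
  unfold upd. destruct (Nat.eqb y x); auto.
Qed.

Lemma upd_list_in : forall xs as_ (rho : nat -> M) y, length as_ = length xs -> In y xs ->
  In (upd_list rho xs as_ y) as_.
Proof.
  induction xs; intros [|b as_] rho y Hl H; cbn in *; try discriminate; try contradiction.
  unfold upd. destruct (Nat.eqb_spec y a); [left; auto|]. right. apply IHxs; [lia|].
  destruct H; [congruence|auto].
Qed.

Lemma map_upd_list : forall xs as_ (rho : nat -> M), NoDup xs -> length as_ = length xs ->
  map (upd_list rho xs as_) xs = as_.
Proof.
  induction xs; intros [|b as_] rho Hnd Hl; cbn in *; try discriminate; auto.
  inversion Hnd; subst. rewrite upd_eq. f_equal.
  rewrite <- (IHxs as_ rho) at 2 by auto. apply map_ext_in. intros y Hy.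
  apply upd_neq. intro; subst; auto.
Qed.

End S.

Section Model.
Context {M : Type} (mem : M -> M -> Prop) (st : M -> Prop) (HM : SPOT_model M mem st).

Lemma pair_aux : forall p a b b', is_pair mem p a b -> is_pair mem p a b' -> b = a -> b' = a.
Proof.
  intros p a b b' H1 H2 E. subst b.
  destruct (ax_pair _ _ _ HM a b') as [s Hs].
  assert (Hin : mem s p) by (apply H2; right; exact Hs).
  apply H1 in Hin. destruct Hin as [K|K].
  - apply K, Hs. auto.
  - destruct (proj1 (K b') (proj2 (Hs b') (or_intror eq_refl))); auto.
Qed.

Lemma pair_inj : forall p a b a' b', is_pair mem p a b -> is_pair mem p a' b' -> a = a' /\ b = b'.
Proof.
  intros p a b a' b' H1 H2.
  destruct (ax_pair _ _ _ HM a a) as [s Hs].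
  assert (Hin : mem s p) by (apply H1; left; intro w; rewrite Hs; tauto).
  assert (Ea : a = a').
  { apply H2 in Hin. assert (Ka : mem a' s) by (destruct Hin as [K|K]; apply K; auto).
    apply Hs in Ka. destruct Ka; auto. }
  subst a'. split; auto.
  destruct (ax_pair _ _ _ HM a b) as [s2 Hs2].
  assert (Hin2 : mem s2 p) by (apply H1; right; exact Hs2).
  apply H2 in Hin2. destruct Hin2 as [K|K].
  - assert (E : b = a) by (apply K, Hs2; auto).
    pose proof (pair_aux _ _ _ _ H1 H2 E). congruence.
  - assert (E : b = a \/ b = b') by (apply K, Hs2; auto).
    destruct E as [E|E]; auto.
    pose proof (pair_aux _ _ _ _ H1 H2 E). congruence.
Qed.

Lemma tuple_inj : forall l1 l2 t, is_tuple mem t l1 -> is_tuple mem t l2 -> length l1 = length l2 -> l1 = l2.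
Proof.
  induction l1 as [|a l1 IH]; intros [|b l2] t H1 H2 Hl; cbn in Hl; try discriminate; auto.
  destruct l1 as [|a2 l1]; destruct l2 as [|b2 l2]; cbn in Hl; try discriminate.
  - cbn in *. congruence.
  - destruct H1 as [t1 [T1 P1]]. destruct H2 as [t2 [T2 P2]].
    destruct (pair_inj _ _ _ _ _ P1 P2) as [-> ->].
    f_equal. apply (IH _ t2); auto.
Qed.

Lemma transfer_ex : forall phi x (rho : nat -> M), in_formula phi ->
  (forall y, is_free y phi -> y <> x -> st (rho y)) ->
  (exists a, sat mem st (upd rho x a) phi) -> exists a, st a /\ sat mem st (upd rho x a) phi.
Proof.
  intros phi x rho Hin Hf [a Ha].
  apply NNPP. intro Hn.
  assert (K : forall b, st b -> sat mem st (upd rho x b) (FNot phi)).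
  { intros b Hb Hs. apply Hn. eauto. }
  eapply (ax_transfer _ _ _ HM (FNot phi)) in K; [exact (K Ha) | exact Hin | exact Hf].
Qed.

Lemma prenex_transfer : forall pre psi, in_formula psi -> forall rho : nat -> M,
  (forall y, is_free y (intf pre psi) -> st (rho y)) ->
  (sat mem st rho (st_prenex pre psi) <-> sat mem st rho (intf pre psi)).
Proof.
  induction pre as [|[[] u] pre IH]; intros psi Hpsi rho Hf; cbn [st_prenex intf sat] in *.
  - tauto.
  - assert (Hs : forall a, st a -> (sat mem st (upd rho u a) (st_prenex pre psi) <->
                                    sat mem st (upd rho u a) (intf pre psi))).
    { intros a Ha. apply IH; auto. intros y Hy. unfold upd.
      destruct (Nat.eqb_spec y u); auto. apply Hf. cbn. auto. }
    split.
    + intros H. apply (ax_transfer _ _ _ HM); auto using in_intf.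
      * intros y Hy Hne. apply Hf. cbn. auto.
      * intros a Ha. apply Hs; auto. apply H. rewrite upd_eq. auto.
    + intros H a Ha. rewrite upd_eq in Ha. apply Hs; auto.
  - assert (Hs : forall a, st a -> (sat mem st (upd rho u a) (st_prenex pre psi) <->
                                    sat mem st (upd rho u a) (intf pre psi))).
    { intros a Ha. apply IH; auto. intros y Hy. unfold upd.
      destruct (Nat.eqb_spec y u); auto. apply Hf. cbn. auto. }
    split.
    + intros [a [Ha H]]. rewrite upd_eq in Ha. exists a. apply Hs; auto.
    + intros H. apply transfer_ex in H; auto using in_intf.
      * destruct H as [a [Ha H]]. exists a. rewrite upd_eq. split; auto. apply Hs; auto.
      * intros y Hy Hne. apply Hf. cbn. auto.
Qed.

End Model.

Theorem lemma2p8 :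
  forall (M : Type) (mem : M -> M -> Prop) (st : M -> Prop),
  SPOT_model M mem st ->
  forall (pre : list (bool * nat)) (psi : form), in_formula psi ->
  forall (vs : list nat), NoDup vs ->
  forall (rho : nat -> M),
  (forall y, is_free y (st_prenex pre psi) -> ~ In y vs -> st (rho y)) ->
  forall S : M, st S ->
  exists P : M, st P /\
    forall (as_ : list M), length as_ = length vs -> Forall st as_ ->
    forall t : M, is_tuple mem t as_ ->
      (mem t P <-> (mem t S /\ sat mem st (upd_list rho vs as_) (st_prenex pre psi))).
Proof.
  intros M mem st HM pre psi Hpsi vs Hnd rho Hrho SS HS.
  remember (intf pre psi) as F eqn:HFdef.
  assert (HFin : in_formula F) by (subst; apply in_intf; auto).
  assert (HN : exists N, (forall y, is_free y F -> y < N) /\ Forall (fun x => x < N) vs).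
  { exists (1 + Nat.max (mv F) (list_max vs)). split.
    - intros y Hy. apply free_mv in Hy. pose proof (Nat.le_max_l (mv F) (list_max vs)). lia.
    - rewrite Forall_forall. intros x Hx. 
      assert (x <= list_max vs) by (pose proof (proj1 (list_max_le vs (list_max vs)) (le_n _)) as K; rewrite Forall_forall in K; auto).
      pose proof (Nat.le_max_r (mv F) (list_max vs)). lia. }
  destruct HN as [N [HFN HvN]].
  set (th := exlist vs (FAnd (Tup (N+3) N vs) F)).
  assert (Hthin : in_formula th).
  { apply in_exlist. cbn. split; auto using in_tup. }
  assert (Hthfree : forall y, is_free y th -> y = N \/ (~ In y vs /\ is_free y F)).
  { intros y Hy. apply free_exlist in Hy. destruct Hy as [Hn Hy]. cbn [is_free] in Hy.
    destruct Hy as [Hy|Hy]; auto.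
    apply free_tup in Hy; [|lia|].
    - destruct Hy; auto. contradiction.
    - eapply Forall_impl; [|exact HvN]. cbn; intros; lia. }
  assert (Hsatth : forall (E : nat -> M) t, E N = t -> (forall y, y < N -> E y = rho y) ->
     (sat mem st E th <-> exists bs, length bs = length vs /\ is_tuple mem t bs /\
                                     sat mem st (upd_list rho vs bs) F)).
  { intros E t Et Ey. unfold th. rewrite sat_exlist. cbn [sat].
    assert (Hnin : ~ In N vs).
    { intro Hi. rewrite Forall_forall in HvN. specialize (HvN _ Hi). lia. }
    split; intros [bs [Hl [H1 H2]]]; exists bs; split; auto.
    - rewrite sat_tup in H1.
      + rewrite upd_list_notin, map_upd_list in H1 by auto. rewrite Et in H1. split; auto.
        revert H2. apply sat_coinc. intros y Hy. apply upd_list_ext. symmetry. apply Ey. auto.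
      + lia.
      + eapply Forall_impl; [|exact HvN]. cbn; intros; lia.
    - split.
      + rewrite sat_tup.
        * rewrite upd_list_notin, map_upd_list by auto. rewrite Et. auto.
        * lia.
        * eapply Forall_impl; [|exact HvN]. cbn; intros; lia.
      + revert H2. apply sat_coinc. intros y Hy. apply upd_list_ext. apply Ey. auto. }
  set (Phi := FAll N (FIff (FMem N (N+1)) (FAnd (FMem N (N+2)) th))).
  destruct (ax_sep _ _ _ HM th Hthin N rho SS) as [B0 HB0].
  assert (HPhi0 : sat mem st (upd (upd rho (N+2) SS) (N+1) B0) Phi).
  { unfold Phi, FIff. cbn [sat]. intro T.
    set (E := upd (upd (upd rho (N + 2) SS) (N + 1) B0) N T).
    assert (E1 : E N = T) by (unfold E, upd; eqbs; auto).
    assert (E2 : E (N+1) = B0) by (unfold E, upd; eqbs; auto).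
    assert (E3 : E (N+2) = SS) by (unfold E, upd; eqbs; auto).
    rewrite E1, E2, E3.
    assert (Hc : sat mem st E th <-> sat mem st (upd rho N T) th).
    { apply sat_coinc. intros y Hy. apply Hthfree in Hy. destruct Hy as [->|[_ Hy]].
      - rewrite E1, upd_eq. auto.
      - apply HFN in Hy. unfold E, upd. eqbs. auto. }
    rewrite Hc. rewrite <- HB0. tauto. }
  assert (HPhi1 : exists a, sat mem st (upd (upd rho (N+2) SS) (N+1) a) Phi) by eauto.
  apply (transfer_ex mem st HM) in HPhi1.
  2:{ unfold Phi, FIff. cbn. intuition. }
  2:{ intros y Hy Hne. unfold Phi, FIff in Hy. cbn [is_free] in Hy.
      destruct Hy as [HyN Hy].
      assert (Hy' : y = N + 2 \/ is_free y th) by (intuition; lia).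
      destruct Hy' as [->|Hy'].
      - rewrite upd_eq. auto.
      - apply Hthfree in Hy'. destruct Hy' as [|[Hn Hy']]; [contradiction|].
        pose proof (HFN _ Hy'). rewrite upd_neq by lia. apply Hrho; auto.
        subst F. apply free_intf. auto. }
  destruct HPhi1 as [P [HP HPhi]]. exists P. split; auto.
  intros as_ Hl Hst t Ht.
  unfold Phi, FIff in HPhi. cbn [sat] in HPhi. specialize (HPhi t).
  set (E := upd (upd (upd rho (N + 2) SS) (N + 1) P) N t) in HPhi.
  assert (E1 : E N = t) by (unfold E, upd; eqbs; auto).
  assert (E2 : E (N+1) = P) by (unfold E, upd; eqbs; auto).
  assert (E3 : E (N+2) = SS) by (unfold E, upd; eqbs; auto).
  rewrite E1, E2, E3 in HPhi.
  rewrite (Hsatth E t E1) in HPhi.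
  2:{ intros y Hy. unfold E, upd. eqbs. auto. }
  assert (Hfin : sat mem st (upd_list rho vs as_) (st_prenex pre psi) <->
                 sat mem st (upd_list rho vs as_) F).
  { subst F. apply (prenex_transfer mem st HM); auto. intros y Hy.
    destruct (in_dec Nat.eq_dec y vs) as [Hi|Hi].
    - rewrite Forall_forall in Hst. apply Hst. apply upd_list_in; auto.
    - rewrite upd_list_notin by auto. apply Hrho; auto. apply free_intf. auto. }
  rewrite Hfin.
  split.
  - intros Ht'. apply HPhi in Ht'. destruct Ht' as [HtS [bs [Hb1 [Hb2 Hb3]]]]. split; auto.
    assert (bs = as_) by (apply (tuple_inj mem st HM) with t; auto; lia). subst bs. auto.
  - intros [HtS Hs]. apply HPhi. split; auto. exists as_. auto.
Qed.
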